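(* Let $A$ be a finite set with $N\ge 2$ elements and let $(v_{xy})$ be a Llull matrix on $A$ with CLC structure such that $t_{xy}>0$ for all distinct $x,y\in A$. Define $\rho_x=\frac{1}{N-1}\sum_{y\neq x}v_{xy}$ and $\sigma_x=\frac{1}{N-1}\sum_{y\neq x}v_{xy}/t_{xy}$. Then for all $x,y\in A$, $\sigma_x>\sigma_y$ if and only if $\rho_x>\rho_y$.
   Context: A Llull matrix on a finite set $A$ is an assignment to each ordered pair of distinct elements $x\neq y$ of $A$ of a number $v_{xy}\in[0,1]$ such that $v_{xy}+v_{yx}\le 1$. Turnouts: $t_{xy}=v_{xy}+v_{yx}$; margins: $m_{xy}=v_{xy}-v_{yx}$. The matrix has CLC structure if there is a total order $\xi$ on $A$ such that, writing $x<_\xi y$ when $x$ precedes $y$ and $x'$ for the immediate successor of $x$ in $\xi$ (when it exists): (i) $v_{xy}\ge v_{yx}$ whenever $x<_\xi y$; (ii) $v_{xz}=\max(v_{xy},v_{yz})$ whenever $x<_\xi y<_\xi z$; (iii) $v_{zx}=\min(v_{zy},v_{yx})$ whenever $x<_\xi y<_\xi z$; (iv) $0\le t_{xz}-t_{x'z}\le m_{xx'}$ whenever $x'$ exists and $z\notin\{x,x'\}$. *)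

(* Defs.v *)
From HB Require Import structures.
From mathcomp Require Import all_boot all_order all_algebra.
Set Implicit Arguments. Unset Strict Implicit. Unset Printing Implicit Defensive.
Import Order.TTheory GRing.Theory Num.Theory.
Local Open Scope ring_scope.

Section Llull.
Variables (R : realFieldType) (A : finType).

(* A Llull matrix: only entries v x y with x != y are meaningful. *)
Definition llull_matrix (v : A -> A -> R) : Prop :=
  forall x y : A, x != y -> 0 <= v x y /\ v x y <= 1 /\ v x y + v y x <= 1.

Definition turnout (v : A -> A -> R) (x y : A) : R := v x y + v y x.
Definition margin (v : A -> A -> R) (x y : A) : R := v x y - v y x.

Definition strict_total_order (lt : rel A) : Prop :=
  (forall x, ~~ lt x x) /\
  (forall x y z, lt x y -> lt y z -> lt x z) /\
  (forall x y, x != y -> lt x y || lt y x).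

Definition imm_succ (lt : rel A) (x x' : A) : Prop :=
  lt x x' /\ forall z, ~ (lt x z /\ lt z x').

Definition CLC (v : A -> A -> R) : Prop :=
  exists lt : rel A, strict_total_order lt /\
    (forall x y, lt x y -> v y x <= v x y) /\
    (forall x y z, lt x y -> lt y z -> v x z = Num.max (v x y) (v y z)) /\
    (forall x y z, lt x y -> lt y z -> v z x = Num.min (v z y) (v y x)) /\
    (forall x x' z, imm_succ lt x x' -> z != x -> z != x' ->
       0 <= turnout v x z - turnout v x' z /\
       turnout v x z - turnout v x' z <= margin v x x').

Definition rho (v : A -> A -> R) (x : A) : R :=
  ((#|A|.-1)%:R)^-1 * \sum_(y | y != x) v x y.

Definition sigma (v : A -> A -> R) (x : A) : R :=
  ((#|A|.-1)%:R)^-1 * \sum_(y | y != x) v x y / turnout v x y.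

End Llull.

(* Main.v *)
Require Import Defs.
From HB Require Import structures.
From mathcomp Require Import all_boot all_order all_algebra.
From mathcomp Require Import ring lra.
Import Order.TTheory GRing.Theory Num.Theory.
Local Open Scope ring_scope.
Set Implicit Arguments. Unset Strict Implicit.


Lemma up_fact (R : realFieldType) (a d b c : R) : 0 <= d -> d <= a -> 0 <= c -> c <= b ->
  [/\ b <= Num.max a b, b * (Num.max a b + Num.min c d) <= Num.max a b * (b + c)
   & a = d -> Num.max a b + Num.min c d = b + c -> Num.max a b = b].
Proof.
move=> h0 h1 h2 h3.
have [h4|h4] := leP a b; have [h5|h5] := leP c d.
- split; [lra|nra|lra].
- split; [lra|nra|lra].
- split; [lra|nra|lra].
- split; [lra|nra|lra].
Qed.

Lemma down_fact (R : realFieldType) (a d e f : R) : 0 <= d -> d <= a -> 0 <= e -> e <= f ->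
  [/\ Num.min d e <= e, Num.min d e * (e + f) <= e * (Num.min d e + Num.max f a)
   & a = d -> e + f = Num.min d e + Num.max f a -> Num.min d e = e].
Proof.
move=> h0 h1 h2 h3.
have [h4|h4] := leP d e; have [h5|h5] := leP f a.
- split; [lra|nra|lra].
- split; [lra|nra|lra].
- split; [lra|nra|lra].
- split; [lra|nra|lra].
Qed.

Lemma frac_le (R : realFieldType) (e1 t1 e2 t2 : R) : 0 < t1 -> 0 < t2 ->
  e2 * t1 <= e1 * t2 -> e2 / t2 <= e1 / t1.
Proof.
move=> h1 h2 h; rewrite -subr_ge0.
have -> : e1 / t1 - e2 / t2 = (e1 * t2 - e2 * t1) / (t1 * t2).
  by field; apply/andP; split; rewrite gt_eqF.
by apply: divr_ge0; [rewrite subr_ge0 | apply: ltW; apply: mulr_gt0].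
Qed.


Lemma consec (R : realFieldType) (A : finType) (v : A -> A -> R) (lt : rel A) (x x' : A) :
 strict_total_order lt ->
 (forall x y, lt x y -> v y x <= v x y) ->
 (forall x y z, lt x y -> lt y z -> v x z = Num.max (v x y) (v y z)) ->
 (forall x y z, lt x y -> lt y z -> v z x = Num.min (v z y) (v y x)) ->
 (forall x x' z, imm_succ lt x x' -> z != x -> z != x' ->
       0 <= turnout v x z - turnout v x' z /\
       turnout v x z - turnout v x' z <= margin v x x') ->
 llull_matrix v -> (forall x y, x != y -> 0 < turnout v x y) -> imm_succ lt x x' ->
 (\sum_(z | z != x') v x' z < \sum_(z | z != x) v x z /\
  \sum_(z | z != x') v x' z / turnout v x' z < \sum_(z | z != x) v x z / turnout v x z)
 \/
 (\sum_(z | z != x') v x' z = \sum_(z | z != x) v x z /\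
  \sum_(z | z != x') v x' z / turnout v x' z = \sum_(z | z != x) v x z / turnout v x z).
Proof.
move=> [irr [tr tot]] hi hii hiii hiv hL ht hs.
have hxx' : lt x x' := hs.1.
have nx : x != x' by apply/eqP => e; move: hxx'; rewrite e (negbTE (irr x')).
have nx' : x' != x by rewrite eq_sym.
have ad := hi _ _ hxx'.
have [d0 _] := hL _ _ nx'.
have hz : forall z, z != x -> z != x' ->
  [/\ v x' z <= v x z, v x' z / turnout v x' z <= v x z / turnout v x z
   & v x x' = v x' x -> v x z = v x' z /\ turnout v x z = turnout v x' z].
  move=> z zx zx'.
  have [iv1 iv2] := hiv _ _ _ hs zx zx'.
  have tpos1 : 0 < turnout v x z by apply: ht; rewrite eq_sym.
  have tpos2 : 0 < turnout v x' z by apply: ht; rewrite eq_sym.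
  have xz : x != z by rewrite eq_sym.
  have x'z : x' != z by rewrite eq_sym.
  have tz : v x x' = v x' x -> turnout v x z = turnout v x' z.
    move=> e; move: iv1 iv2; rewrite /margin e subrr => p q.
    by apply/eqP; rewrite -subr_eq0 eq_le p q.
  have [zlx|nzlx] := boolP (lt z x).
    have e1 := hii _ _ _ zlx hxx'.
    have e2 := hiii _ _ _ zlx hxx'.
    have ef := hi _ _ zlx.
    have [h1 h2 h3] := down_fact d0 ad (proj1 (hL x z xz)) ef.
    split.
    - by rewrite e2.
    - by apply: frac_le => //; rewrite /turnout e1 e2.
    - move=> e; split; last exact: tz.
      have := tz e; rewrite /turnout e1 e2 => q.
      by rewrite (h3 e q).
  have lxz : lt x z by move: (tot _ _ xz); rewrite (negbTE nzlx) orbF.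
  have lx'z : lt x' z.
    move: (tot _ _ x'z) => /orP [//|h]; exfalso; exact: (hs.2 z (conj lxz h)).
  have e1 := hii _ _ _ hxx' lx'z.
  have e2 := hiii _ _ _ hxx' lx'z.
  have ef := hi _ _ lx'z.
  have [h1 h2 h3] := up_fact d0 ad (proj1 (hL z x' zx')) ef.
  split.
  - by rewrite e1.
  - by apply: frac_le => //; rewrite /turnout e1 e2.
  - move=> e; split; last exact: tz.
    have := tz e; rewrite /turnout e1 e2 => q.
    by rewrite (h3 e q).
have t0 : 0 < turnout v x x' := ht _ _ nx.
have tt : turnout v x' x = turnout v x x' by rewrite /turnout addrC.
have Ex : forall F : A -> R, \sum_(z | z != x) F z = F x' + \sum_(z | (z != x) && (z != x')) F z.
  by move=> F; rewrite (bigD1 x').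
have Ex' : forall F : A -> R, \sum_(z | z != x') F z = F x + \sum_(z | (z != x) && (z != x')) F z.
  move=> F; rewrite (bigD1 x) //; congr (_ + _); apply: eq_bigl => z; exact: andbC.
rewrite (Ex (fun z => v x z)) (Ex' (fun z => v x' z)).
rewrite (Ex (fun z => v x z / turnout v x z)) (Ex' (fun z => v x' z / turnout v x' z)) tt.
have [e|lt_da] := eqVneq (v x x') (v x' x).
  right; rewrite e; split; congr (_ + _); apply: eq_bigr => z /andP [zx zx'].
    by have [_ _ /(_ e) [-> _]] := hz z zx zx'.
  by have [_ _ /(_ e) [-> ->]] := hz z zx zx'.
have lda : v x' x < v x x' by rewrite lt_neqAle eq_sym lt_da ad.
left; split; apply: ltr_leD.
- done.
- by apply: ler_sum => z /andP [zx zx']; have [] := hz z zx zx'.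
- by rewrite ltr_pM2r // invr_gt0.
- by apply: ler_sum => z /andP [zx zx']; have [] := hz z zx zx'.
Qed.


Definition PP (R : realFieldType) (A : finType) (v : A -> A -> R) (x y : A) : Prop :=
  (rho v y < rho v x /\ sigma v y < sigma v x) \/ (rho v y = rho v x /\ sigma v y = sigma v x).

Lemma PP_trans (R : realFieldType) (A : finType) (v : A -> A -> R) x y z :
  PP v x y -> PP v y z -> PP v x z.
Proof.
rewrite /PP => [[[a b]|[a b]]] [[c d]|[c d]].
- left; split; lra.
- left; split; lra.
- left; split; lra.
- right; split; lra.
Qed.

Lemma chain (R : realFieldType) (A : finType) (v : A -> A -> R) (lt : rel A) :
 (2 <= #|A|)%N ->
 strict_total_order lt ->
 (forall x y, lt x y -> v y x <= v x y) ->
 (forall x y z, lt x y -> lt y z -> v x z = Num.max (v x y) (v y z)) ->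
 (forall x y z, lt x y -> lt y z -> v z x = Num.min (v z y) (v y x)) ->
 (forall x x' z, imm_succ lt x x' -> z != x -> z != x' ->
       0 <= turnout v x z - turnout v x' z /\
       turnout v x z - turnout v x' z <= margin v x x') ->
 llull_matrix v -> (forall x y, x != y -> 0 < turnout v x y) ->
 forall n x y, lt x y -> (#|[pred z | lt x z && lt z y]| <= n)%N -> PP v x y.
Proof.
move=> hN hso hi hii hiii hiv hL ht.
have hc : 0 < ((#|A|.-1)%:R : R)^-1.
  by rewrite invr_gt0 ltr0n; case: #|A| hN => [|[|k]].
have Pc : forall x x', imm_succ lt x x' -> PP v x x'.
  move=> x x' hs; rewrite /PP /rho /sigma.
  case: (consec hso hi hii hiii hiv hL ht hs) => [[h1 h2]|[h1 h2]].
    by left; rewrite !ltr_pM2l.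
  by right; rewrite h1 h2.
have [irr [tr tot]] := hso.
elim=> [|n IH] x y lxy hcard;
  (case: (pickP [pred z | lt x z && lt z y]) => [w /andP [h1 h2]|none];
   last by apply: Pc; split => // z [h1 h2]; move: (none z); rewrite /= h1 h2);
  have hp : (#|[pred z | lt x z && lt z w]| < #|[pred z | lt x z && lt z y]|)%N by
    (apply: proper_card; apply/properP; split;
      [apply/subsetP => z; rewrite !inE => /andP [a b]; by rewrite a (tr _ _ _ b h2)
      |exists w; rewrite !inE ?h1 ?h2 ?(negbTE (irr w)) ?andbF //]).
- by move: hcard; rewrite leqn0 => /eqP e; rewrite e in hp.
- have hp2 : (#|[pred z | lt w z && lt z y]| < #|[pred z | lt x z && lt z y]|)%N.
    apply: proper_card; apply/properP; split.
      apply/subsetP => z; rewrite !inE => /andP [a b]; by rewrite b (tr _ _ _ h1 a).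
    by exists w; rewrite !inE ?h1 ?h2 ?(negbTE (irr w)) //.
  apply: (@PP_trans _ _ _ _ w).
    by apply: IH => //; rewrite -ltnS; apply: leq_trans hp hcard.
  by apply: IH => //; rewrite -ltnS; apply: leq_trans hp2 hcard.
Qed.

Unset Implicit Arguments. Set Strict Implicit.

Theorem corollary3p7 (R : realFieldType) (A : finType) (v : A -> A -> R) :
  (2 <= #|A|)%N ->
  llull_matrix v ->
  CLC v ->
  (forall x y : A, x != y -> 0 < turnout v x y) ->
  forall x y : A, (sigma v y < sigma v x) <-> (rho v y < rho v x).
Proof.
move=> hN hL [lt [hso [hi [hii [hiii hiv]]]]] ht x y.
have ch := chain hN hso hi hii hiii hiv hL ht.
have [irr [tr tot]] := hso.
have [->|nxy] := eqVneq x y; first by rewrite !ltxx.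
case/orP: (tot _ _ nxy) => h.
  case: (ch _ _ _ h (leqnn _)) => [[a b]|[a b]]; first by split.
  by rewrite a b !ltxx.
case: (ch _ _ _ h (leqnn _)) => [[a b]|[a b]].
  by split => c; exfalso; lra.
by rewrite a b !ltxx.
Qed.
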